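(* For each $n\ge1$ there is a bijection $\psi'$ from the set of plane trees with $n$ edges to $\mathfrak S_n(132)$ such that, for every such tree $T$ and $\pi=\psi'(T)$: (1) the number of young leaves of $T$ equals the number of double ascents of $\pi(n+1)=(\pi_1,\dots,\pi_n,n+1)$; (2) the number of old leaves of $T$ equals the number of ascending runs of $\pi(n+1)$.
   Context: A plane tree is a rooted tree in which the children of each vertex are linearly ordered. A leaf is a vertex with no children; the one-vertex tree has no leaves. A leaf is old if it is the leftmost child of its parent, young otherwise. $\mathfrak S_n(132)$ is the set of permutations of $\{1,\dots,n\}$ with no indices $a<b<c$ such that $\pi_a<\pi_c<\pi_b$. For a sequence $\sigma$, a double ascent is an index $i$ with $\sigma_i<\sigma_{i+1}<\sigma_{i+2}$, and an ascending run is a maximal increasing sequence $\sigma_i<\sigma_{i+1}<\cdots<\sigma_{i+k}$ of consecutive entries with $k\ge1$. *)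

(* Defs.v *)
From mathcomp Require Import all_boot all_fingroup.
Set Implicit Arguments. Unset Strict Implicit. Unset Printing Implicit Defensive.

Inductive ptree : Type := Node of seq ptree.

Fixpoint edges (t : ptree) : nat :=
  let: Node ts := t in sumn (map (fun c => (edges c).+1) ts).

Definition is_leaf (t : ptree) : bool := if t is Node [::] then true else false.

Fixpoint old_leaves (t : ptree) : nat :=
  let: Node ts := t in
  (if ts is c :: _ then is_leaf c else false) + sumn (map old_leaves ts).

Fixpoint young_leaves (t : ptree) : nat :=
  let: Node ts := t in
  count is_leaf (behead ts) + sumn (map young_leaves ts).

Definition avoids132 n (p : {perm 'I_n}) : Prop :=
  ~ exists a b c : 'I_n, [/\ a < b, b < c, p a < p c & p c < p b].

Definition word_ext n (p : {perm 'I_n}) : seq nat :=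
  [seq (p i).+1 | i <- enum 'I_n] ++ [:: n.+1].

Definition double_ascents (s : seq nat) : nat :=
  count (fun i => (nth 0 s i < nth 0 s i.+1) && (nth 0 s i.+1 < nth 0 s i.+2))
        (iota 0 (size s - 2)).

(* ascending runs = maximal increasing factors of length >= 2; counted by
   their starting index i: s_i < s_{i+1} and (i = 0 or s_{i-1} >= s_i) *)
Definition ascending_runs (s : seq nat) : nat :=
  count (fun i => (nth 0 s i < nth 0 s i.+1) &&
                  ((i == 0) || (nth 0 s i.-1 >= nth 0 s i)))
        (iota 0 (size s - 1)).

(* Main.v *)
Require Import Defs.
From mathcomp Require Import all_boot all_fingroup.
From mathcomp Require Import zify.
Set Implicit Arguments. Unset Strict Implicit. Unset Printing Implicit Defensive.

Fixpoint ttc (l : seq bool) : nat :=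
  match l with a :: ((b :: _) as r) => (a && b) + ttc r | _ => 0 end.
Fixpoint stp (pf : bool) (l : seq bool) : nat :=
  match l with [::] => 0 | a :: r => (a && pf) + stp (~~ a) r end.
Fixpoint ascs (s : seq nat) : seq bool :=
  match s with x :: ((y :: _) as r) => (x < y) :: ascs r | _ => [::] end.

Lemma ttc_cat l1 l2 : ttc (l1 ++ false :: l2) = ttc l1 + ttc l2.
Proof.
elim: l1 => [|a [|b l1] IH] /=; first by case: l2.
  by rewrite andbF.
by move: IH => /= ->; rewrite addnA.
Qed.

Lemma stp_cat pf l1 l2 : stp pf (l1 ++ false :: l2) = stp pf l1 + stp true l2.
Proof. by elim: l1 pf => [|a l1 IH] pf //=; rewrite IH addnA. Qed.

Lemma ttc_rcons l : ttc (rcons l true) = ttc l + last false l.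
Proof.
elim: l => [|a [|b l] IH] //=; first by rewrite andbT addn0.
by move: IH => /= ->; rewrite addnA.
Qed.

Lemma stp_rcons pf l : stp pf (rcons l true) = stp pf l + ~~ last (~~ pf) l.
Proof.
elim: l pf => [|a l IH] pf /=; first by case: pf.
by rewrite IH negbK addnA.
Qed.

Lemma size_ascs s : size (ascs s) = (size s).-1.
Proof. by elim: s => [|x [|y s] IH] //=; rewrite IH. Qed.

Lemma nth_ascs s i : i < (size s).-1 -> nth false (ascs s) i = (nth 0 s i < nth 0 s i.+1).
Proof.
elim: s i => [|x [|y s] IH] i //=.
case: i => [|i] //= H; exact: IH.
Qed.

Lemma ascs_map_add k s : ascs (map (addn^~ k) s) = ascs s.
Proof. by elim: s => [|x [|y s] IH] //=; move: IH => /= ->; rewrite ltn_add2r. Qed.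

Lemma ascs_rcons s x y : ascs (rcons (rcons s x) y) = rcons (ascs (rcons s x)) (x < y).
Proof. by elim: s => [|a [|b s] IH] //=; move: IH => /= ->. Qed.

Lemma ascs_cat s x y t : ascs (rcons s x ++ y :: t) = ascs (rcons s x) ++ (x < y) :: ascs (y :: t).
Proof. by elim: s => [|a [|b s] IH] //=; move: IH => /= ->. Qed.

Lemma ttc_count l : count (fun i => nth false l i && nth false l i.+1) (iota 0 (size l).-1) = ttc l.
Proof.
elim: l => [|a [|b l] IH] //=.
rewrite -add1n iotaDl count_map; move: IH => /= <-; congr (_ + _).
Qed.

Lemma stp_count pf l :
  count (fun i => nth false l i && (if i is j.+1 then ~~ nth false l j else pf)) (iota 0 (size l)) = stp pf l.
Proof.
elim: l pf => [|a l IH] pf //=.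
rewrite -add1n iotaDl count_map -IH; congr (_ + _).
by apply: eq_count => -[|i].
Qed.

Lemma da_ttc s : double_ascents s = ttc (ascs s).
Proof.
rewrite /double_ascents -ttc_count size_ascs.
have -> : size s - 2 = (size s).-1.-1 by lia.
apply: eq_in_count => i; rewrite mem_iota add0n => Hi.
rewrite !nth_ascs //; lia.
Qed.

Lemma runs_stp s : ascending_runs s = stp true (ascs s).
Proof.
rewrite /ascending_runs -stp_count size_ascs.
have -> : size s - 1 = (size s).-1 by lia.
apply: eq_in_count => i; rewrite mem_iota add0n => Hi.
rewrite nth_ascs //; case: i Hi => [|i] Hi //=.
by rewrite nth_ascs -?leqNgt //; lia.
Qed.

Definition comb (a b : seq nat) : seq nat :=
  map (addn^~ (size b)) a ++ (size a + size b) :: b.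

Fixpoint psiS (t : ptree) : seq nat :=
  let: Node ts := t in foldl (fun acc c => comb acc (psiS c)) [::] ts.

Lemma psiS_rcons r c : psiS (Node (rcons r c)) = comb (psiS (Node r)) (psiS c).
Proof. by rewrite /= foldl_rcons. Qed.

Lemma edges_rcons r c : edges (Node (rcons r c)) = edges (Node r) + (edges c).+1.
Proof. by rewrite /= map_rcons sumn_rcons. Qed.

Lemma young_rcons r c : young_leaves (Node (rcons r c)) =
  young_leaves (Node r) + young_leaves c + (is_leaf c && (size r != 0)).
Proof.
case: r => [|x r] /=; first by rewrite andbF !addn0.
rewrite map_rcons sumn_rcons -cats1 count_cat /= andbT addn0; lia.
Qed.

Lemma old_rcons r c : old_leaves (Node (rcons r c)) =
  old_leaves (Node r) + old_leaves c + (is_leaf c && (size r == 0)).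
Proof.
case: r => [|x r] /=; first by rewrite andbT !addn0 addnC.
rewrite map_rcons sumn_rcons andbF; lia.
Qed.

Lemma ptree_ind' (P : ptree -> Prop) : P (Node [::]) ->
  (forall r c, P (Node r) -> P c -> P (Node (rcons r c))) -> forall T, P T.
Proof.
move=> H0 HS T.
suff : forall n T, edges T < n -> P T by apply; exact: ltnSn.
elim=> [|n IH] [ts] // Hlt; move: Hlt.
case/lastP: ts => [|r c] //; rewrite edges_rcons ltnS => He.
apply: HS; apply: IH; lia.
Qed.

Definition isperm m s := perm_eq s (iota 0 m).

Lemma isperm_intro m s : uniq s -> size s = m -> (forall x, x \in s -> x < m) -> isperm m s.
Proof.
move=> Us Ss Hs; apply: uniq_perm => //; first exact: iota_uniq.
have H1 : {subset s <= iota 0 m} by move=> x /Hs; rewrite mem_iota.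
have H2 : size (iota 0 m) <= size s by rewrite size_iota Ss.
by have [] := uniq_min_size Us H1 H2.
Qed.

Lemma isperm_uniq m s : isperm m s -> uniq s.
Proof. by move/perm_uniq ->; exact: iota_uniq. Qed.
Lemma isperm_size m s : isperm m s -> size s = m.
Proof. by move/perm_size ->; rewrite size_iota. Qed.
Lemma isperm_mem m s x : isperm m s -> (x \in s) = (x < m).
Proof. by move/perm_mem ->; rewrite mem_iota. Qed.

Lemma isperm_comb p q a b : isperm p a -> isperm q b -> isperm (p + q).+1 (comb a b).
Proof.
move=> Ha Hb; have Sa := isperm_size Ha; have Sb := isperm_size Hb.
apply: isperm_intro.
- rewrite cat_uniq map_inj_uniq; last exact: addIn.
  rewrite (isperm_uniq Ha) /= (isperm_uniq Hb) (isperm_mem _ Hb) Sa Sb andbT.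
  rewrite -leqNgt leq_addl /= andbT negb_or; apply/andP; split.
    apply/mapP => -[y]; rewrite (isperm_mem _ Ha); lia.
  apply/hasPn => x; rewrite (isperm_mem _ Hb) => Hx; apply/mapP => -[y] _; lia.
- by rewrite size_cat size_map /= Sa Sb addnS.
- move=> x; rewrite mem_cat inE Sa Sb => /or3P [/mapP [y] | /eqP -> |].
  + rewrite (isperm_mem _ Ha) => Hy ->; lia.
  + lia.
  + rewrite (isperm_mem _ Hb); lia.
Qed.

Lemma isperm_psiS T : isperm (edges T) (psiS T).
Proof.
elim/ptree_ind': T => [|r c IH1 IH2]; first by [].
rewrite psiS_rcons edges_rcons addnS; exact: isperm_comb.
Qed.

Lemma comb_inj a b a' b' : comb a b = comb a' b' ->
  (forall x, x \in a -> x < size a) -> (forall x, x \in a' -> x < size a') -> a = a' /\ b = b'.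
Proof.
move=> E Ha Ha'.
have Hs : size a + size b = size a' + size b'.
  by move/(congr1 size): E; rewrite !size_cat !size_map /=; lia.
have Hi : forall a b, (forall x, x \in a -> x < size a) ->
    index (size a + size b) (comb a b) = size a.
  move=> a0 b0 H0; rewrite /comb index_cat.
  have -> : (size a0 + size b0 \in map (addn^~ (size b0)) a0) = false.
    by apply/negbTE/mapP => -[y /H0]; lia.
  by rewrite size_map /= eqxx addn0.
have Ea : size a = size a'.
  by rewrite -(Hi a b Ha) -(Hi a' b' Ha') E Hs.
have Eb : size b = size b' by lia.
move: E; rewrite /comb Ea Eb => E.
split; last first.
  move/(congr1 (drop (size a').+1)): E; rewrite -!cat_rcons !drop_size_cat //.
    by rewrite size_rcons size_map.
  by rewrite size_rcons size_map Ea.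
move/(congr1 (take (size a'))): E; rewrite !take_size_cat ?size_map // => E.
exact: (inj_map (@addIn (size b'))) E.
Qed.

Lemma psiS_inj T1 T2 : psiS T1 = psiS T2 -> T1 = T2.
Proof.
elim/ptree_ind': T1 T2 => [|r c IH1 IH2] [ts2] E.
  case/lastP: ts2 E => [|r2 c2] // E.
  by move/(congr1 size): E; rewrite psiS_rcons /comb size_cat /=; lia.
case/lastP: ts2 E => [|r2 c2] E.
  by move/(congr1 size): E; rewrite psiS_rcons /comb size_cat /=; lia.
move: E; rewrite !psiS_rcons => /comb_inj [].
- by move=> x; rewrite (isperm_mem _ (isperm_psiS _)) (isperm_size (isperm_psiS _)).
- by move=> x; rewrite (isperm_mem _ (isperm_psiS _)) (isperm_size (isperm_psiS _)).
by move=> /IH1 [->] /IH2 ->.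
Qed.

Definition ext0 (s : seq nat) := rcons s (size s).

Lemma ascs_rcons_lt s X Y : (forall z, z \in s -> z < X) -> (forall z, z \in s -> z < Y) ->
  ascs (rcons s X) = ascs (rcons s Y).
Proof.
case/lastP: s => [|s z] // HX HY; rewrite !ascs_rcons.
have Hz : z \in rcons s z by rewrite mem_rcons mem_head.
by rewrite (HX z Hz) (HY z Hz).
Qed.

Lemma last_ascs_ext a p : isperm p a -> last false (ascs (ext0 a)) = (size a != 0).
Proof.
case/lastP: a => [|a z] // Ha.
rewrite /ext0 ascs_rcons last_rcons size_rcons /=.
move: (isperm_mem z Ha) (isperm_size Ha); rewrite mem_rcons mem_head size_rcons => Hz Hs.
by rewrite Hs -Hz.
Qed.

Lemma edges0 r : (edges (Node r) == 0) = (size r == 0).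
Proof. by case: r. Qed.

Lemma stats_psiS T : young_leaves T = ttc (ascs (ext0 (psiS T))) /\
                     old_leaves T = stp true (ascs (ext0 (psiS T))).
Proof.
elim/ptree_ind': T => [|r c [IHy1 IHo1] [IHy2 IHo2]]; first by [].
rewrite young_rcons old_rcons psiS_rcons.
have Ha := isperm_psiS (Node r); have Hb := isperm_psiS c.
set a := psiS (Node r) in Ha IHy1 IHo1 *.
case: c IHy2 IHo2 Hb => [[|x xs]] IHy2 IHo2 Hb.
- have -> : comb a (psiS (Node [::])) = rcons a (size a).
    rewrite /comb /= addn0 cats1; congr rcons.
    by elim: (a) => //= y s ->; rewrite addn0.
  rewrite /ext0 size_rcons ascs_rcons ltnSn ttc_rcons stp_rcons.
  rewrite (last_ascs_ext Ha) (isperm_size Ha) -edges0 -(isperm_size Ha) -/(ext0 a).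
  have -> : young_leaves (Node [::]) = 0 by [].
  have -> : old_leaves (Node [::]) = 0 by [].
  by rewrite -IHy1 -IHo1 !addn0 negbK.
- set c := Node (x :: xs) in IHy2 IHo2 Hb *.
  have Hc : is_leaf c = false by [].
  rewrite Hc andFb.
  set b := psiS c in IHy2 IHo2 Hb *.
  have Sb : 0 < size b by rewrite (isperm_size Hb) /c /=; lia.
  case: b Sb Hb IHy2 IHo2 => [|y t] // _ Hb IHy2 IHo2.
  have E : ext0 (comb a (y :: t)) =
     rcons (map (addn^~ (size (y::t))) a) (size a + size (y::t))
       ++ y :: rcons t (size (comb a (y :: t))).
    by rewrite /ext0 /comb rcons_cat cat_rcons.
  have Hm : forall z, z \in y :: t -> z < size (y :: t).
    by move=> z; rewrite (isperm_mem _ Hb) (isperm_size Hb).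
  rewrite E ascs_cat -map_rcons ascs_map_add -/(ext0 a).
  have -> : size a + size (y :: t) < y = false.
    by apply/negbTE; rewrite -leqNgt; have := Hm y (mem_head _ _); lia.
  have -> : ascs (y :: rcons t (size (comb a (y :: t)))) = ascs (ext0 (y :: t)).
    rewrite /ext0 -rcons_cons; apply: ascs_rcons_lt => // z /Hm.
    rewrite /comb size_cat /=; lia.
  by rewrite ttc_cat stp_cat IHy1 IHo1 IHy2 IHo2 andFb !addn0.
Qed.

Definition av (s : seq nat) := forall i j l, i < j -> j < l -> l < size s ->
  ~~ ((nth 0 s i < nth 0 s l) && (nth 0 s l < nth 0 s j)).

Lemma av_take k s : av s -> av (take k s).
Proof.
move=> H i j l Hij Hjl; rewrite size_take => Hl.
have [Hlk Hls] : l < k /\ l < size s by move: Hl; case: (ltnP k (size s)) => H1 H2; lia.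
rewrite !nth_take; try lia.
exact: H.
Qed.

Lemma av_drop k s : av s -> av (drop k s).
Proof.
move=> H i j l Hij Hjl; rewrite size_drop => Hl.
rewrite !nth_drop; apply: H; lia.
Qed.

Lemma av_map_add k s : av (map (addn^~ k) s) -> av s.
Proof.
move=> H i j l Hij Hjl Hl; have := H i j l Hij Hjl; rewrite size_map => /(_ Hl).
by rewrite !(nth_map 0) ?ltn_add2r //; lia.
Qed.

Lemma av_split A m B x y : av (A ++ m :: B) -> x \in A -> y \in B -> x < y -> y < m -> False.
Proof.
move=> H xA yB Hxy Hym.
have := H (index x A) (size A) (size A + (index y B).+1).
have HiA : index x A < size A by rewrite index_mem.
have HiB : index y B < size B by rewrite index_mem.
rewrite size_cat /= !nth_cat HiA ltnn subnn /=.
have -> : (size A + (index y B).+1 < size A) = false by lia.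
have -> : size A + (index y B).+1 - size A = (index y B).+1 by lia.
rewrite /= !nth_index // Hxy Hym /=; move=> Hf; have // : false by apply: Hf => //; lia.
Qed.

Lemma psiS_surj m s : isperm m s -> av s -> exists T, edges T = m /\ psiS T = s.
Proof.
elim/ltn_ind: m s => m IH s Hs Has.
case: m IH Hs => [|k] IH Hs.
  exists (Node [::]); split => //.
  by have := isperm_size Hs; case: (s).
have Us := isperm_uniq Hs; have Ss := isperm_size Hs.
have ks : k \in s by rewrite (isperm_mem _ Hs).
have Es : s = take (index k s) s ++ k :: drop (index k s).+1 s.
  by rewrite -{1}(cat_take_drop (index k s) s) (drop_nth k) ?index_mem // nth_index.
move: Es; set A' := take _ s; set B := drop _ s => Es.
have Us' : uniq (A' ++ k :: B) by rewrite -Es.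
move: Us'; rewrite cat_uniq => /and3P [UA nA UkB].
move: UkB => /= /andP [kB UB].
have kA : k \notin A' by move/hasPn: nA => /(_ k (mem_head _ _)).
have Hlt : forall z, z \in A' ++ B -> z < k.
  move=> z Hz.
  have : z \in s by rewrite Es mem_cat inE; move: Hz; rewrite mem_cat => /orP [->|->]; rewrite ?orbT.
  rewrite (isperm_mem _ Hs) ltnS leq_eqVlt => /orP [/eqP Ez|//].
  by move: Hz; rewrite mem_cat Ez (negbTE kA) (negbTE kB).
have HAB : forall x y, x \in A' -> y \in B -> y < x.
  move=> x y xA yB; case: (ltngtP x y) => // [Hxy | Exy].
    exfalso; apply: (av_split (A:=A') (m:=k) (B:=B) _ xA yB Hxy).
      by rewrite -Es.
    by apply: Hlt; rewrite mem_cat yB orbT.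
  move/hasPn: nA => /(_ y); rewrite inE yB orbT -Exy xA => /(_ isT) //.
have HB : forall y, y \in B -> y < size B.
  move=> y yB; rewrite ltnNge; apply/negP => Hqy.
  have yk : y < k by apply: Hlt; rewrite mem_cat yB orbT.
  have Hsub : {subset iota 0 y.+1 <= B}.
    move=> z; rewrite mem_iota add0n => Hz.
    have zs : z \in s by rewrite (isperm_mem _ Hs); lia.
    move: zs; rewrite Es mem_cat inE => /or3P [zA | /eqP zk | //].
    - have := HAB z y zA yB; lia.
    - lia.
  have := uniq_leq_size (iota_uniq 0 y.+1) Hsub; rewrite size_iota; lia.
have HA : forall x, x \in A' -> size B <= x.
  move=> x xA.
  have Hsub : {subset B <= iota 0 x} by move=> z zB; rewrite mem_iota /=; exact: HAB.
  by have := uniq_leq_size UB Hsub; rewrite size_iota.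
have SAB : size A' + size B = k.
  by move/(congr1 size): Es; rewrite Ss size_cat /=; lia.
pose A := map (subn^~ (size B)) A'.
have EA : map (addn^~ (size B)) A = A'.
  rewrite -map_comp -[RHS]map_id; apply/eq_in_map => x /HA Hx /=; exact: subnK.
have HisA : isperm (size A') A.
  apply: isperm_intro; [by rewrite -(map_inj_uniq (@addIn (size B))) EA | by rewrite size_map | ].
  move=> z /mapP [x xA ->]; have := HA x xA; have := Hlt x; rewrite mem_cat xA => /(_ isT); lia.
have HisB : isperm (size B) B by apply: isperm_intro.
have avA : av A by apply: (av_map_add (k:=size B)); rewrite EA; exact: av_take.
have avB : av B by exact: av_drop.
have [[ts] [ETA PTA]] := IH (size A') (ltac:(lia)) A HisA avA.
have [TB [ETB PTB]] := IH (size B) (ltac:(lia)) B HisB avB.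
exists (Node (rcons ts TB)); split.
  by rewrite edges_rcons ETA ETB; lia.
rewrite psiS_rcons PTA PTB /comb EA size_map [in RHS]Es SAB.
done.
Qed.

Lemma nth_comb a b i : nth 0 (comb a b) i =
  if i < size a then nth 0 a i + size b
  else if i == size a then size a + size b else nth 0 b (i - (size a).+1).
Proof.
rewrite /comb nth_cat size_map; case: ltnP => H; first by rewrite (nth_map 0).
case: eqVneq => [->|Hne]; first by rewrite subnn.
have -> : i - size a = (i - (size a).+1).+1 by lia.
by [].
Qed.

Lemma av_comb a b : av a -> av b -> (forall x, x \in a -> x < size a) ->
  (forall x, x \in b -> x < size b) -> av (comb a b).
Proof.
move=> Ha Hb Ba Bb i j l Hij Hjl; rewrite /comb size_cat size_map /= -/(comb a b) => Hl.
have Na : forall k, k < size a -> nth 0 a k < size a by move=> k Hk; apply: Ba; exact: mem_nth.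
have Nb : forall k, k < size b -> nth 0 b k < size b by move=> k Hk; apply: Bb; exact: mem_nth.
rewrite !nth_comb.
case: (ltnP l (size a)) => Hlp.
  have -> : i < size a by lia.
  have -> : j < size a by lia.
  rewrite !ltn_add2r; exact: Ha.
case: (ltnP (size a) i) => Hpi.
  have -> : (i < size a) = false by lia.
  have -> : (j < size a) = false by lia.
  have -> : (i == size a) = false by lia.
  have -> : (j == size a) = false by lia.
  have -> : (l == size a) = false by lia.
  apply: Hb; lia.
apply/negP => /andP [H1 H2].
case: (eqVneq l (size a)) => [El | Nl].
  move: H1 H2; rewrite El eqxx.
  have -> : j < size a by lia.
  have := Na j (ltac:(lia)); lia.
have Hl' : (l < size a) = false by lia.
move: H1 H2; rewrite ?Hl' (negbTE Nl).
have := Nb (l - (size a).+1) (ltac:(lia)).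
case: (ltnP i (size a)) => Hi; first lia.
have -> : i == size a by lia.
lia.
Qed.

Lemma av_psiS T : av (psiS T).
Proof.
elim/ptree_ind': T => [|r c IH1 IH2]; first by move=> i j l _ _.
rewrite psiS_rcons; apply: av_comb => // x;
  by rewrite (isperm_mem _ (isperm_psiS _)) (isperm_size (isperm_psiS _)).
Qed.

Definition seqp n (p : {perm 'I_n}) : seq nat := [seq val (p i) | i <- enum 'I_n].

Lemma size_seqp n (p : {perm 'I_n}) : size (seqp p) = n.
Proof. by rewrite size_map size_enum_ord. Qed.

Lemma nth_seqp n (p : {perm 'I_n}) (i : 'I_n) : nth 0 (seqp p) i = p i.
Proof. by rewrite /seqp (nth_map i) ?size_enum_ord ?ltn_ord // nth_ord_enum. Qed.

Lemma isperm_seqp n (p : {perm 'I_n}) : isperm n (seqp p).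
Proof.
apply: isperm_intro; last 1 first.
- by move=> x /mapP [i _ ->]; exact: ltn_ord.
- rewrite map_inj_uniq ?enum_uniq // => x y /val_inj; exact: perm_inj.
- exact: size_seqp.
Qed.

Lemma seqp_inj n (p q : {perm 'I_n}) : seqp p = seqp q -> p = q.
Proof. by move=> E; apply/permP => i; apply/val_inj; rewrite /= -!nth_seqp E. Qed.

Lemma seqp_surj n s : isperm n.+1 s -> exists p : {perm 'I_n.+1}, seqp p = s.
Proof.
move=> Hs; have Ss := isperm_size Hs; have Us := isperm_uniq Hs.
have Bs : forall i, i < n.+1 -> nth 0 s i < n.+1.
  by move=> i Hi; rewrite -(isperm_mem _ Hs) mem_nth // Ss.
pose f (i : 'I_n.+1) : 'I_n.+1 := inord (nth 0 s i).
have f_inj : injective f.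
  move=> i j /(congr1 val); rewrite /f /= !inordK ?Bs // => /eqP.
  by rewrite nth_uniq ?Ss // => /eqP /val_inj.
exists (perm f_inj); apply: (@eq_from_nth _ 0); first by rewrite size_seqp Ss.
move=> i; rewrite size_seqp => Hi.
by rewrite -[i]/(nat_of_ord (Ordinal Hi)) nth_seqp permE /f /= inordK ?Bs.
Qed.

Lemma avoidsE n (p : {perm 'I_n}) : avoids132 p <-> av (seqp p).
Proof.
split.
- move=> Hav i j l Hij Hjl; rewrite size_seqp => Hl; apply/negP => /andP [H1 H2].
  have Hi : i < n by lia.
  have Hj : j < n by lia.
  apply: Hav; exists (Ordinal Hi), (Ordinal Hj), (Ordinal Hl).
  by rewrite -!nth_seqp /=.
- move=> Hav [a [b [c [Hab Hbc H1 H2]]]].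
  have := Hav a b c Hab Hbc; rewrite size_seqp ltn_ord !nth_seqp H1 H2 => /(_ isT) //.
Qed.

Lemma word_extE n (p : {perm 'I_n}) : word_ext p = map (addn^~ 1) (ext0 (seqp p)).
Proof.
rewrite /word_ext /ext0 size_seqp -cats1 map_cat /seqp -map_comp /= addn1.
by congr (_ ++ _); apply: eq_map => x /=; rewrite addn1.
Qed.

Theorem mainTheorem13 (n : nat) (hn : 0 < n) :
  exists psi : ptree -> {perm 'I_n},
    [/\ (forall T, edges T = n -> avoids132 (psi T)),
        (forall T1 T2, edges T1 = n -> edges T2 = n -> psi T1 = psi T2 -> T1 = T2),
        (forall p : {perm 'I_n}, avoids132 p -> exists T, edges T = n /\ psi T = p)
      & (forall T, edges T = n ->
           young_leaves T = double_ascents (word_ext (psi T)) /\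
           old_leaves T = ascending_runs (word_ext (psi T)))].
Proof.
case: n hn => // n _.
pose psi T := odflt (1%g : {perm 'I_n.+1}) [pick p : {perm 'I_n.+1} | seqp p == psiS T].
have Hpsi : forall T, edges T = n.+1 -> seqp (psi T) = psiS T.
  move=> T ET; rewrite /psi; case: pickP => [p /eqP //| H].
  have := isperm_psiS T; rewrite ET => /seqp_surj [p Ep].
  by have := H p; rewrite Ep eqxx.
exists psi; split.
- by move=> T ET; apply/avoidsE; rewrite Hpsi //; exact: av_psiS.
- move=> T1 T2 E1 E2 E; apply: psiS_inj; by rewrite -Hpsi // E Hpsi.
- move=> p /avoidsE Hp.
  have [T [ET PT]] := psiS_surj (isperm_seqp p) Hp.
  exists T; split => //; apply: seqp_inj; by rewrite Hpsi.
- move=> T ET; rewrite word_extE da_ttc runs_stp ascs_map_add Hpsi //.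
  exact: stats_psiS.
Qed.
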